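(* Let $M=\{1,\dots,m\}$ carry the measure $\mu$ with atoms of positive masses $\mu_1,\dots,\mu_m$, and $N=\{1,\dots,n\}$ the measure $\nu$ with atoms of positive masses $\nu_1,\dots,\nu_n$. Let $t>0$ and $1\le q<p\le\infty$, $\alpha=1/q-1/p$, and $C(p,q)=(1-q/p)^{1/q}$. For real $m\times n$ matrices $a$ let $\|a\|$ be the $L^{p,\infty}(\mu)$ quasi-norm of $i\mapsto\big(\sum_{j\in N}|a(i,j)|^q\nu_j\big)^{1/q}$, let $\|a\|^{\top}$ be the $L^{p,\infty}(\nu)$ quasi-norm of $j\mapsto\big(\sum_{i\in M}|a(i,j)|^q\mu_i\big)^{1/q}$, let $\|a\|_{\ell^q}=\big(\sum_{i,j}|a(i,j)|^q\mu_i\nu_j\big)^{1/q}$, and $$|||a|||_{p,q,t}=\sup_{E,F}\big(\mu(E)^{\alpha}\vee t^{-1}\nu(F)^{\alpha}\big)^{-1}\|1_{E\times F}\cdot a\|_{\ell^q},$$ the supremum over nonempty $E\subset M$, $F\subset N$. Let $K_{p,q,t}(a)=\inf\{\|b\|+t\|c\|^{\top}: a=b+c\}$ (the $K_t$-functional of the couple $\ell^{p,\infty}_m(\ell^q_n),\ \ell^{p,\infty}_n(\ell^q_m)$). Then for every matrix $a$ $$C(p,q)\,|||a|||_{p,q,t}\le K_{p,q,t}(a)\le 2\,|||a|||_{p,q,t}.$$ More precisely, if $|||a|||_{p,q,t}\le1$ there are $A,B$ with $M\times N=A\cup B$, $A\cap B=\emptyset$, and $\|1_A\cdot a\|\le1$,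 $\|1_B\cdot a\|^{\top}\le1/t$.
   Context: For a nonnegative function $g$ on a measure space, $g^*(s)=\inf\{\lambda>0:\text{measure}\{g>\lambda\}\le s\}$ is its nonincreasing rearrangement and $\|g\|_{L^{p,\infty}}=\sup_{s>0}s^{1/p}g^*(s)$ (for $p=\infty$ this is the sup norm). $1_S$ is the indicator of $S$, $\cdot$ is entrywise multiplication, $u\vee v=\max(u,v)$. *)

(* Defs.v *)
From mathcomp Require Import all_boot all_order all_algebra.
From mathcomp Require Import all_classical all_reals all_analysis.
Set Implicit Arguments. Unset Strict Implicit. Unset Printing Implicit Defensive.
Import Order.TTheory GRing.Theory Num.Theory.
Local Open Scope classical_set_scope.
Local Open Scope ring_scope.

Section Defs.
Variable R : realType.

Definition msr (k : nat) (w : 'I_k -> R) (E : {set 'I_k}) : R :=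
  \sum_(i in E) w i.

Definition rearr (k : nat) (w : 'I_k -> R) (g : 'I_k -> R) (s : R) : R :=
  inf [set l : R | 0 < l /\ msr w [set i | l < g i] <= s].

Definition weak_norm (p : \bar R) (k : nat) (w : 'I_k -> R) (g : 'I_k -> R)
  : \bar R :=
  match p with
  | r%:E => ereal_sup [set ((s `^ r^-1) * rearr w g s)%:E | s in [set s : R | 0 < s]]
  | +oo%E => (\big[Num.max/0]_(i < k) g i)%:E
  | -oo%E => 0%E
  end.

Definition einv (p : \bar R) : R :=
  match p with r%:E => r^-1 | _ => 0 end.

Definition rowq (m n : nat) (q : R) (nu : 'I_n -> R) (a : 'M[R]_(m, n))
  (i : 'I_m) : R := (\sum_(j < n) `|a i j| `^ q * nu j) `^ q^-1.

Definition colq (m n : nat) (q : R) (mu : 'I_m -> R) (a : 'M[R]_(m, n))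
  (j : 'I_n) : R := (\sum_(i < m) `|a i j| `^ q * mu i) `^ q^-1.

Definition mnorm (m n : nat) (p : \bar R) (q : R) (mu : 'I_m -> R)
  (nu : 'I_n -> R) (a : 'M[R]_(m, n)) : \bar R := weak_norm p mu (rowq q nu a).
Definition mnormT (m n : nat) (p : \bar R) (q : R) (mu : 'I_m -> R)
  (nu : 'I_n -> R) (a : 'M[R]_(m, n)) : \bar R := weak_norm p nu (colq q mu a).

Definition lq_norm (m n : nat) (q : R) (mu : 'I_m -> R) (nu : 'I_n -> R)
  (a : 'M[R]_(m, n)) : R :=
  (\sum_(i < m) \sum_(j < n) `|a i j| `^ q * mu i * nu j) `^ q^-1.

Definition indmul (m n : nat) (A : {set 'I_m * 'I_n}) (a : 'M[R]_(m, n))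
  : 'M[R]_(m, n) := \matrix_(i, j) (if (i, j) \in A then a i j else 0).

Definition triple_norm (m n : nat) (p : \bar R) (q t : R) (mu : 'I_m -> R)
  (nu : 'I_n -> R) (a : 'M[R]_(m, n)) : \bar R :=
  let alpha := q^-1 - einv p in
  ereal_sup [set ((Num.max (msr mu EF.1 `^ alpha) (t^-1 * msr nu EF.2 `^ alpha))^-1
                  * lq_norm q mu nu (indmul (finset.setX EF.1 EF.2) a))%:E
            | EF in [set EF : {set 'I_m} * {set 'I_n} | EF.1 != finset.set0 /\ EF.2 != finset.set0]].

Definition Kfun (m n : nat) (p : \bar R) (q t : R) (mu : 'I_m -> R)
  (nu : 'I_n -> R) (a : 'M[R]_(m, n)) : \bar R :=
  ereal_inf [set (mnorm p q mu nu bc.1 + t%:E * mnormT p q mu nu bc.2)%E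
            | bc in [set bc : 'M[R]_(m, n) * 'M[R]_(m, n) | a = bc.1 + bc.2]].

Definition Cpq (p : \bar R) (q : R) : R := (1 - q * einv p) `^ q^-1.

End Defs.

(* Main.v *)
Require Import Defs.
From mathcomp Require Import all_boot all_order all_algebra.
From mathcomp Require Import all_classical all_reals all_analysis.
From mathcomp Require Import ring lra zify.
Import Order.TTheory GRing.Theory Num.Theory.

Module MP1.
Set Implicit Arguments. Unset Strict Implicit.
Import Order.TTheory GRing.Theory Num.Theory.
Local Open Scope classical_set_scope.
Local Open Scope ring_scope.

Section P1.
Variable R : realType.
Implicit Types x y z a b h r : R.

Lemma powR_lee r x y : 0 < r -> 0 <= x -> 0 <= y -> (x `^ r <= y `^ r) = (x <= y).
Proof.
move=> r0 x0 y0; apply/idP/idP => H.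
  rewrite leNgt; apply/negP => yx.
  have := gt0_ltr_powR r0 (y:=x) (x:=y); rewrite !nnegrE => /(_ y0 x0 yx).
  by rewrite ltNge H.
by apply: ge0_ler_powR => //; [exact: ltW| rewrite nnegrE..].
Qed.

Lemma powRK x r : 0 <= x -> r != 0 -> (x `^ r) `^ r^-1 = x.
Proof. by move=> x0 r0; rewrite -powRrM mulfV // powRr1. Qed.

Lemma powRKV x r : 0 <= x -> r != 0 -> (x `^ r^-1) `^ r = x.
Proof. by move=> x0 r0; rewrite -powRrM mulVf // powRr1. Qed.

Lemma tangent b x y : 0 < b <= 1 -> 0 < x -> 0 <= y ->
  y `^ b <= x `^ b + b * (x `^ b / x) * (y - x).
Proof.
move=> /andP[b0 b1] x0 y0.
have [->|bne1] := eqVneq b 1.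
  rewrite !powRr1 ?(ltW x0) // mulfV ?gt_eqF //; lra.
have b1' : b < 1 by rewrite lt_neqAle bne1.
set z := y / x.
have z0 : 0 <= z by rewrite divr_ge0 // ltW.
have bi0 : 0 < b^-1 by rewrite invr_gt0.
have ci0 : 0 < (1 - b)^-1 by rewrite invr_gt0 subr_gt0.
have Hs : b^-1^-1 + (1 - b)^-1^-1 = 1 by rewrite !invrK addrC subrK.
have := @conjugate_powR R (z `^ b) 1 b^-1 (1 - b)^-1 (powR_ge0 _ _) ler01 bi0 ci0 Hs.
rewrite mulr1 powRK ?gt_eqF // powR1 !invrK => Hz.
have -> : y = z * x by rewrite /z divfK ?gt_eqF.
rewrite powRM //; last exact: ltW x0.
have xb0 : 0 <= x `^ b by apply: powR_ge0.
have E : x `^ b + b * (x `^ b / x) * (z * x - x) = (z * b + 1 * (1 - b)) * x `^ b.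
  by field; rewrite gt_eqF.
by rewrite E ler_wpM2r.
Qed.

Lemma concave_pow b l x y : 0 < b <= 1 -> 0 <= l <= 1 -> 0 <= x -> 0 <= y ->
  l * x `^ b + (1 - l) * y `^ b <= (l * x + (1 - l) * y) `^ b.
Proof.
move=> bb /andP[l0 l1] x0 y0.
have b0 : 0 < b by case/andP: bb.
set m := l * x + (1 - l) * y.
have m0 : 0 <= m by rewrite /m addr_ge0 // mulr_ge0 // subr_ge0.
have [m_eq0|mpos] := eqVneq m 0.
  have p1 : 0 <= l * x by rewrite mulr_ge0.
  have p2 : 0 <= (1 - l) * y by rewrite mulr_ge0 // subr_ge0.
  move: m_eq0; rewrite /m => m_eq0.
  have lx0 : l * x = 0 by lra.
  have ly0 : (1 - l) * y = 0 by lra.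
  have -> : l * x `^ b = 0.
    by move/eqP: lx0; rewrite mulf_eq0 => /orP[/eqP->|/eqP->]; rewrite ?mul0r // powR0 ?gt_eqF // mulr0.
  have -> : (1 - l) * y `^ b = 0.
    by move/eqP: ly0; rewrite mulf_eq0 => /orP[/eqP->|/eqP->]; rewrite ?mul0r // powR0 ?gt_eqF // mulr0.
  by rewrite addr0 powR_ge0.
have mp : 0 < m by rewrite lt_neqAle eq_sym mpos m0.
have Tx := tangent bb mp x0.
have Ty := tangent bb mp y0.
set k := b * (m `^ b / m) in Tx Ty.
have h1 : l * x `^ b <= l * (m `^ b + k * (x - m)) by rewrite ler_wpM2l.
have h2 : (1 - l) * y `^ b <= (1 - l) * (m `^ b + k * (y - m)) by rewrite ler_wpM2l // subr_ge0.
have : l * (m `^ b + k * (x - m)) + (1 - l) * (m `^ b + k * (y - m)) = m `^ b.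
  rewrite /m; ring.
move=> E; rewrite -E; exact: lerD.
Qed.

Lemma incr_pow b a c h : 0 < b <= 1 -> 0 <= a <= c -> 0 <= h ->
  (c + h) `^ b - c `^ b <= (a + h) `^ b - a `^ b.
Proof.
move=> bb /andP[a0 ac] h0.
have c0 : 0 <= c by apply: le_trans ac.
have [d0|dpos] := eqVneq (c + h - a) 0.
  have ea : a = c by lra.
  have eh : h = 0 by lra.
  by rewrite ea eh.
have dp : 0 < c + h - a by rewrite lt_neqAle eq_sym dpos; lra.
set l := h / (c + h - a).
have l0 : 0 <= l by rewrite divr_ge0 // ltW.
have l1 : l <= 1 by rewrite ler_pdivrMr // mul1r; lra.
have E1 : a + h = l * (c + h) + (1 - l) * a.
  rewrite /l; field; by rewrite dpos.
have E2 : c = (1 - l) * (c + h) + (1 - (1 - l)) * a.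
  rewrite /l; field; by rewrite dpos.
have C1 := concave_pow bb (l:=l) (x:=c + h) (y:=a) _ _ a0.
have C2 := concave_pow bb (l:=1 - l) (x:=c + h) (y:=a) _ _ a0.
rewrite l0 l1 /= in C1; rewrite subr_ge0 l1 /= in C2.
have C1' := C1 isT (addr_ge0 c0 h0).
have C2' : (1 - l) * (c + h) `^ b + (1 - (1 - l)) * a `^ b <=
   ((1 - l) * (c + h) + (1 - (1 - l)) * a) `^ b.
  apply: C2; [by rewrite lerBlDr lerDl| exact: addr_ge0].
rewrite -E1 in C1'; rewrite -E2 in C2'.
lra.
Qed.

Lemma powRV (y e : R) : 0 <= y -> (y^-1) `^ e = (y `^ e)^-1.
Proof. by move=> y0; rewrite -powR_inv1 // -powRrM mulN1r powRN. Qed.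

Lemma powR1B (X e : R) : 0 < X -> X `^ (1 - e) = X * (X `^ e)^-1.
Proof.
move=> X0; rewrite powRB; last by rewrite (gt_eqF X0) implybT.
by rewrite powRr1 // ltW.
Qed.

End P1.

End MP1.
Import MP1.

Module MP2.
Import fintype finset.
Set Implicit Arguments. Unset Strict Implicit.
Import Order.TTheory GRing.Theory Num.Theory.
Local Open Scope classical_set_scope.
Local Open Scope ring_scope.

Section P2.
Variable R : realType.
Variables (k : nat) (w : 'I_k -> R) (g : 'I_k -> R).
Hypothesis w0 : forall i, 0 < w i.
Hypothesis g0 : forall i, 0 <= g i.

Lemma msr_ge0 (E : {set 'I_k}) : 0 <= msr w E.
Proof. by rewrite /msr sumr_ge0 // => i _; exact: ltW. Qed.

Lemma msr_gt0 (E : {set 'I_k}) : E != finset.set0 -> 0 < msr w E.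
Proof.
case/set0Pn => i iE; rewrite /msr (bigD1 i) //=.
by rewrite ltr_pwDl // sumr_ge0 // => j _; exact: ltW.
Qed.

Lemma msr_sub (E F : {set 'I_k}) : (E \subset F)%SET -> msr w E <= msr w F.
Proof.
move=> EF; rewrite /msr [X in _ <= X](bigID (fun i => i \in E)) /=.
have -> : \sum_(i in F | i \in E) w i = \sum_(i in E) w i.
  by apply: eq_bigl => i; rewrite andb_idl // => /(subsetP EF).
by rewrite lerDl sumr_ge0 // => i _; exact: ltW.
Qed.

Lemma rearr_n0 s : 0 < s ->
  [set l : R | 0 < l /\ msr w [set i | l < g i]%SET <= s] !=set0.
Proof.
move=> s0.
exists (\sum_i g i + 1); split; first by rewrite ltr_pwDr // sumr_ge0.
have -> : [set i | \sum_i0 g i0 + 1 < g i]%SET = finset.set0.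
  apply/setP => i; rewrite !inE; apply/negbTE; rewrite -leNgt.
  rewrite (bigD1 i) //= -addrA lerDl addr_ge0 // sumr_ge0 //.
by rewrite /msr big_set0 ltW.
Qed.

Lemma rearr_ge0 s : 0 < s -> 0 <= rearr w g s.
Proof.
move=> s0; apply: lb_le_inf.
  exists (\sum_i g i + 1); split; first by rewrite ltr_pwDr // sumr_ge0.
  have -> : [set i | \sum_i0 g i0 + 1 < g i]%SET = finset.set0.
    apply/setP => i; rewrite !inE; apply/negbTE; rewrite -leNgt.
    rewrite (bigD1 i) //= -addrA lerDl addr_ge0 // sumr_ge0 //.
  by rewrite /msr big_set0 ltW.
by move=> l [l0 _]; exact: ltW.
Qed.

Variables (q : R) (p : \bar R).
Hypothesis q1 : 1 <= q.
Hypothesis qp : (q%:E < p)%E.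

Lemma q0 : 0 < q. Proof. exact: lt_le_trans ltr01 q1. Qed.

Lemma einv_ge0 : 0 <= einv p.
Proof. by case: p qp => [r| |] //= qr; rewrite invr_ge0 ltW // (lt_trans q0). Qed.

Lemma qeinv_lt1 : q * einv p < 1.
Proof.
case: p qp => [r| |] //=; rewrite ?mulr0 // lte_fin => qr.
by rewrite ltr_pdivrMr ?mul1r // (lt_trans q0).
Qed.

Lemma beta_gt0 : 0 < 1 - q * einv p.
Proof. by rewrite subr_gt0 qeinv_lt1. Qed.

Lemma beta_le1 : 1 - q * einv p <= 1.
Proof. by rewrite lerBlDr lerDl; apply: mulr_ge0; [exact: ltW q0| exact: einv_ge0]. Qed.

Lemma weak_norm_ge0 : (0 <= weak_norm p w g)%E.
Proof.
case: p qp => [r| |] //= _.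
  apply: ereal_sup_ge; exists ((1 `^ r^-1 * rearr w g 1)%:E); first by exists 1 => //=; rewrite ltr01.
  by rewrite lee_fin (mulr_ge0 (powR_ge0 _ _) (rearr_ge0 ltr01)).
rewrite lee_fin; apply: (big_ind (fun x => 0 <= x)) => // x y x0 y0.
by rewrite le_max x0.
Qed.

Lemma W1 (c : R) : 0 < c ->
  (forall E : {set 'I_k}, E != finset.set0 ->
     \sum_(i in E) g i `^ q * w i <= c `^ q * msr w E `^ (1 - q * einv p)) ->
  (weak_norm p w g <= c%:E)%E.
Proof.
move=> c0.
case: p qp => [r| |] //=; rewrite ?lte_fin => qr H.
- have r0 : 0 < r := lt_trans q0 qr.
  apply: ge_ereal_sup => _ [s s0 <-]; rewrite lee_fin.
  set l := c / s `^ r^-1.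
  have sp : 0 < s `^ r^-1 by rewrite powR_gt0.
  have l0 : 0 < l by rewrite divr_gt0.
  have : rearr w g s <= l.
    apply: ge_inf; first by exists 0 => x [x0 _]; exact: ltW.
    split => //.
    set E := [set i | l < g i]%SET.
    have [->|En] := eqVneq E finset.set0; first by rewrite /msr big_set0 ltW.
    have X0 := msr_gt0 En.
    have HE := H E En.
    have : l `^ q * msr w E <= c `^ q * msr w E `^ (1 - q * r^-1).
      apply: le_trans HE; rewrite /msr mulr_sumr; apply: ler_sum => i; rewrite inE => li.
      apply: ler_wpM2r; first exact: ltW.
      by rewrite powR_lee ?q0 ?(ltW l0) // ltW.
    have Hl : l `^ q = c `^ q * ((s `^ r^-1) `^ q)^-1.
      rewrite /l powRM ?(ltW c0) ?invr_ge0 ?(ltW sp) // powRV // ltW //.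
    rewrite Hl -powRrM powR1B //.
    set X := msr w E; set e := q * r^-1.
    have e0 : 0 < e by rewrite mulr_gt0 ?q0 ?invr_gt0.
    rewrite (mulrC r^-1 q) -/e.
    have cq : 0 < c `^ q by rewrite powR_gt0.
    move=> Hi.
    have cX : 0 < c `^ q * X by rewrite mulr_gt0.
    have : (s `^ e)^-1 <= (X `^ e)^-1.
      rewrite -(ler_pM2l cX).
      have E1 : c `^ q * X * (s `^ e)^-1 = c `^ q / s `^ e * X by ring.
      have E2 : c `^ q * X * (X `^ e)^-1 = c `^ q * (X / X `^ e) by ring.
      by rewrite E1 E2.
    rewrite lef_pV2 ?posrE ?powR_gt0 // powR_lee //; exact: ltW.
  move=> Hr; apply: le_trans (ler_wpM2l (ltW sp) Hr) _.
  by rewrite /l mulrC divfK ?gt_eqF.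
- rewrite lee_fin; apply/bigmax_leP; split; first exact: ltW.
  move=> i _.
  have s1 : [set i]%SET != finset.set0 by apply/set0Pn; exists i; rewrite inE.
  have := H [set i]%SET s1.
  rewrite big_set1 /msr big_set1 mulr0 subr0 powRr1; last exact: ltW.
  rewrite ler_pM2r //.
  by rewrite powR_lee ?q0 ?g0 ?(ltW c0).
Qed.

Lemma powR_ltt (r x y : R) : 0 < r -> 0 <= x -> 0 <= y -> (x `^ r < y `^ r) = (x < y).
Proof. by move=> r0 x0 y0; rewrite !ltNge powR_lee. Qed.

Lemma KP (N : R) : (weak_norm p w g <= N%:E)%E ->
  forall i, g i * msr w [set j | g i <= g j]%SET `^ einv p <= N.
Proof.
move=> HN i.
have N0 : 0 <= N by rewrite -lee_fin (le_trans weak_norm_ge0 HN).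
set W := msr w [set j | g i <= g j]%SET.
have W0 : 0 < W by apply: msr_gt0; apply/set0Pn; exists i; rewrite inE.
case: p qp HN => [r| |] //=; rewrite ?lte_fin => qr HN.
- have r0 : 0 < r := lt_trans q0 qr.
  rewrite leNgt; apply/negP => Hlt.
  have gi0 : 0 < g i.
    rewrite lt_neqAle g0 andbT; apply/eqP => gi; move: Hlt.
    by rewrite -gi mul0r ltNge N0.
  set s0 := (N / g i) `^ r.
  have s0_0 : 0 <= s0 := powR_ge0 _ _.
  have Ng0 : 0 <= N / g i by rewrite divr_ge0 // ltW.
  have Hs0 : s0 `^ r^-1 = N / g i by rewrite powRK // gt_eqF.
  have ri0 : 0 < r^-1 by rewrite invr_gt0.
  have s0W : s0 < W.
    by rewrite -(powR_ltt ri0 s0_0 (ltW W0)) Hs0 ltr_pdivrMr // mulrC.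
  set s := (s0 + W) / 2.
  have s0s : s0 < s by rewrite /s; lra.
  have sW : s < W by rewrite /s; lra.
  have sp : 0 < s by apply: le_lt_trans s0s.
  have Hrs : g i <= rearr w g s.
    apply: lb_le_inf; first exact: rearr_n0.
    move=> l [l0 Hl]; rewrite leNgt; apply/negP => lgi.
    have : W <= msr w [set j | l < g j]%SET.
      apply: msr_sub; apply/subsetP => j; rewrite !inE => gij.
      exact: lt_le_trans gij.
    move=> HW; have := le_trans HW Hl; rewrite leNgt sW //.
  have Hel : ((s `^ r^-1 * rearr w g s)%:E <= N%:E)%E.
    apply: le_trans HN; apply: ereal_sup_ge.
    by exists ((s `^ r^-1 * rearr w g s)%:E) => //; exists s.
  rewrite lee_fin in Hel.
  have : s0 `^ r^-1 < s `^ r^-1 by rewrite (powR_ltt ri0 s0_0 (ltW sp)).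
  rewrite Hs0 ltr_pdivrMr // => HH.
  have := lt_le_trans HH (le_trans (ler_wpM2l (powR_ge0 _ _) Hrs) Hel).
  by rewrite ltxx.
- rewrite powRr0 mulr1 -lee_fin; apply: le_trans HN; rewrite lee_fin.
  exact: le_bigmax.
Qed.

Lemma W2 (N : R) : (weak_norm p w g <= N%:E)%E ->
  forall E : {set 'I_k}, \sum_(i in E) g i `^ q * w i <=
     N `^ q * msr w E `^ (1 - q * einv p) / (1 - q * einv p).
Proof.
move=> HN.
have N0 : 0 <= N by rewrite -lee_fin (le_trans weak_norm_ge0 HN).
have KPi := KP HN.
set b := 1 - q * einv p.
have b0 : 0 < b := beta_gt0.
have bb : 0 < b <= 1 by rewrite b0 beta_le1.
have ge0 : 0 <= einv p := einv_ge0.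
have Nq0 : 0 <= N `^ q := powR_ge0 _ _.
move=> E; have [n] := ubnP #|E|; elim: n E => // n IH E.
rewrite ltnS => cardE.
have [->|En] := eqVneq E finset.set0.
  by rewrite big_set0 divr_ge0 ?mulr_ge0 ?powR_ge0 // ltW.
case/set0Pn: En => i1 i1E.
case: (@arg_minP _ _ _ i1 (fun i => i \in E) g i1E) => i0 i0E Hmin.
set E' := (E :\ i0)%SET.
have cardE' : (#|E'| < n)%N.
  by move: cardE; rewrite (cardsD1 i0 E) i0E.
have IHE := IH E' cardE'.
have sumE : \sum_(i in E) g i `^ q * w i = g i0 `^ q * w i0 + \sum_(i in E') g i `^ q * w i.
  rewrite (bigD1 i0) //=; congr (_ + _); apply: eq_bigl => j.
  by rewrite in_setD1 andbC.
have msrE : msr w E = w i0 + msr w E'.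
  rewrite /msr (bigD1 i0) //=; congr (_ + _); apply: eq_bigl => j.
  by rewrite in_setD1 andbC.
set x := msr w E; set y := msr w E'.
have xp : 0 < x by apply: msr_gt0; apply/set0Pn; exists i0.
have y0 : 0 <= y := msr_ge0 _.
have Kx : g i0 * x `^ einv p <= N.
  apply: le_trans (KPi i0); apply: ler_wpM2l; first exact: g0.
  apply: ge0_ler_powR => //; rewrite ?nnegrE ?msr_ge0 //.
  apply: msr_sub; apply/subsetP => j jE; rewrite inE; exact: Hmin.
set e := q * einv p.
have C1 : g i0 `^ q * w i0 <= N `^ q * w i0 * (x `^ b / x).
  have Ex : x `^ b / x = (x `^ e)^-1 by rewrite /b powR1B // mulrAC mulfV ?gt_eqF // mul1r.
  rewrite Ex mulrAC ler_pM2r //.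
  have xe : 0 < x `^ e by rewrite powR_gt0.
  rewrite ler_pdivlMr //.
  have : (g i0 * x `^ einv p) `^ q <= N `^ q.
    rewrite powR_lee ?q0 //; by rewrite mulr_ge0 ?powR_ge0.
  by rewrite powRM ?g0 ?powR_ge0 // -powRrM (mulrC (einv p) q).
have T := tangent bb xp y0.
have yx : y - x = - w i0 by rewrite /x /y msrE; lra.
rewrite yx in T.
rewrite sumE.
apply: le_trans (lerD C1 IHE) _.
set A := x `^ b / x.
have T' : b * A * w i0 + y `^ b <= x `^ b.
  by move: T; rewrite mulrN; set Z := b * A * w i0; lra.
have E1 : N `^ q * w i0 * A + N `^ q * y `^ b / b = N `^ q * (b * A * w i0 + y `^ b) / b.
  by field; rewrite gt_eqF.
by rewrite E1 ler_pM2r ?invr_gt0 // ler_wpM2l.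
Qed.

End P2.

End MP2.
Import MP2.

Module MP3.
Set Implicit Arguments. Unset Strict Implicit.
Import fintype finset.
Import Order.TTheory GRing.Theory Num.Theory.
Local Open Scope ring_scope.

Section P3.
Variable R : realType.
Variables (I J : finType) (w : I * J -> R).
Variables (phi : {set I} -> R) (psi : {set J} -> R).
Hypothesis w0 : forall x, 0 <= w x.
Hypothesis phi0 : phi finset.set0 = 0.
Hypothesis psi0 : psi finset.set0 = 0.
Hypothesis phi_ge0 : forall E, 0 <= phi E.
Hypothesis psi_ge0 : forall F, 0 <= psi F.
Hypothesis phi_sub : forall E0 E1 E2 : {set I}, E1 \subset E0 -> [disjoint E2 & E0] ->
  phi (E0 :|: E2) + phi E1 <= phi (E1 :|: E2) + phi E0.
Hypothesis psi_sub : forall F0 F1 F2 : {set J}, F1 \subset F0 -> [disjoint F2 & F0] ->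
  psi (F0 :|: F2) + psi F1 <= psi (F1 :|: F2) + psi F0.

Local Notation S X := (\sum_(x in X) w x).

Hypothesis H : forall (E : {set I}) (F : {set J}), E != finset.set0 -> F != finset.set0 ->
  S (finset.setX E F) <= Num.max (phi E) (psi F).

Lemma SU (X Y : {set I * J}) : [disjoint X & Y] -> S (X :|: Y) = S X + S Y.
Proof. by move=> d; rewrite -bigU //; apply: eq_bigl => x; rewrite !inE. Qed.

Lemma S0 : S (finset.set0 : {set I * J}) = 0.
Proof. by rewrite big_set0. Qed.

Definition good (M : {set I}) (N : {set J}) (A : {set I * J}) :=
  [/\ A \subset finset.setX M N,
      forall E : {set I}, E \subset M -> S (A :&: finset.setX E [set: J]) <= phi E &
      forall F : {set J}, F \subset N -> S ((finset.setX M N :\: A) :&: finset.setX [set: I] F) <= psi F].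

Lemma main_gen n : forall (M : {set I}) (N : {set J}), (#|M| + #|N| < n)%N -> exists A, good M N A.
Proof.
elim: n => // n IH M N.
rewrite ltnS => card.
have [->|Mn] := eqVneq M finset.set0.
  exists finset.set0; split; first exact: finset.sub0set.
    by move=> E _; rewrite finset.set0I S0 phi_ge0.
  move=> F _; have -> : (finset.setX finset.set0 N :\: finset.set0) :&: finset.setX [set: I] F = finset.set0.
    by apply/finset.setP => -[i j]; rewrite !inE.
  by rewrite S0 psi_ge0.
have [->|Nn] := eqVneq N finset.set0.
  exists finset.set0; split; first exact: finset.sub0set.
    by move=> E _; rewrite finset.set0I S0 phi_ge0.
  move=> F _; have -> : (finset.setX M finset.set0 :\: finset.set0) :&: finset.setX [set: I] F = finset.set0.
    by apply/finset.setP => -[i j]; rewrite !inE andbF.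
  by rewrite S0 psi_ge0.
set ex := fun E : {set I} => S (finset.setX E N) - phi E.
have ex0 : ex finset.set0 = 0.
  rewrite /ex /= phi0 subr0; have -> : finset.setX (finset.set0 : {set I}) N = finset.set0.
    by apply/finset.setP => -[i j]; rewrite !inE.
  exact: S0.
case: (boolP [exists E : {set I}, (E \proper M) && (ex M <= ex E)]).
- case/existsP => Ew /andP[EwM HEw].
  case: (@arg_maxP _ _ _ Ew (fun E => E \proper M) ex EwM) => E0 E0M Hmax.
  have E0sM : E0 \subset M by move: E0M; rewrite finset.properEneq => /andP[].
  have HmaxM : forall E : {set I}, E \subset M -> ex E <= ex E0.
    move=> E EM; have [->|EnM] := eqVneq E M; first exact: le_trans HEw (Hmax Ew EwM).
    by apply: Hmax; rewrite finset.properEneq EnM.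
  have cardE0 : (#|E0| + #|N| < n)%N.
    have := proper_card E0M; move: card; lia.
  have [A0 [A0sub A0row A0col]] := IH E0 N cardE0.
  have hA : forall i j, ((i, j) \in A0) ==> ((i \in E0) && (j \in N)).
    by move=> i j; apply/implyP => h; have := subsetP A0sub _ h; rewrite !inE.
  have hE0 : forall i, (i \in E0) ==> (i \in M).
    by move=> i; apply/implyP => h; exact: (fintype.subsetP E0sM).
  exists (A0 :|: finset.setX (M :\: E0) N); split.
  + apply/fintype.subsetP => -[i j]; rewrite !inE /=.
    move: (hA i j) (hE0 i).
    by case: ((i, j) \in A0); case: (i \in E0); case: (i \in M); case: (j \in N).
  + move=> E EM.
    have hE : forall i, (i \in E) ==> (i \in M).
      by move=> i; apply/implyP => h; exact: (fintype.subsetP EM).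
    have eq1 : (A0 :|: finset.setX (M :\: E0) N) :&: finset.setX E [set: J] =
       (A0 :&: finset.setX (E :&: E0) [set: J]) :|: finset.setX (E :\: E0) N.
      apply/finset.setP => -[i j]; rewrite !inE /=.
      move: (hA i j) (hE0 i) (hE i).
      by case: ((i, j) \in A0); case: (i \in E0); case: (i \in M); case: (j \in N);
        case: (i \in E).
    have d1 : [disjoint A0 :&: finset.setX (E :&: E0) [set: J] & finset.setX (E :\: E0) N].
      rewrite -finset.setI_eq0; apply/eqP/finset.setP => -[i j]; rewrite !inE /=.
      by case: ((i, j) \in A0); case: (i \in E0); case: (j \in N); case: (i \in E).
    rewrite eq1 SU //.
    set E1 := E :&: E0; set E2 := E :\: E0.
    have r1 := A0row E1 (finset.subsetIr E E0).
    have E2M : E0 :|: E2 \subset M.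
      apply/fintype.subsetP => i; rewrite /E2 !inE; move: (hE0 i) (hE i).
      by case: (i \in E0); case: (i \in M); case: (i \in E).
    have hm := HmaxM _ E2M.
    have eq2 : finset.setX (E0 :|: E2) N = finset.setX E0 N :|: finset.setX E2 N.
      apply/finset.setP => -[i j]; rewrite /E2 !inE /=.
      by case: (i \in E0); case: (i \in E); case: (j \in N).
    have d2 : [disjoint finset.setX E0 N & finset.setX E2 N].
      rewrite -finset.setI_eq0; apply/eqP/finset.setP => -[i j]; rewrite /E2 !inE /=.
      by case: (i \in E0); case: (i \in E); case: (j \in N).
    move: hm; rewrite /ex eq2 SU // => hm.
    have d3 : [disjoint E2 & E0].
      rewrite -finset.setI_eq0; apply/eqP/finset.setP => i; rewrite /E2 !inE /=.
      by case: (i \in E0); case: (i \in E).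
    have ps := phi_sub (finset.subsetIr E E0) d3.
    rewrite /E1 /E2 finset.setID in ps.
    lra.
  + move=> F FN.
    have eq3 : finset.setX M N :\: (A0 :|: finset.setX (M :\: E0) N) =
               finset.setX E0 N :\: A0.
      apply/finset.setP => -[i j]; rewrite !inE /=.
      move: (hA i j) (hE0 i).
      by case: ((i, j) \in A0); case: (i \in E0); case: (i \in M); case: (j \in N).
    by rewrite eq3; exact: A0col.
- move/existsPn => Hno.
  have exM : 0 < ex M.
    by have := Hno finset.set0; rewrite finset.proper0 Mn /= -ltNge ex0.
  have WM : S (finset.setX M N) <= psi N.
    have := H Mn Nn; rewrite le_max => /orP[h|//].
    by move: exM; rewrite /ex /=; lra.
  set ex' := fun F : {set J} => S (finset.setX M F) - psi F.
  have ex0' : ex' finset.set0 = 0.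
    rewrite /ex' /= psi0 subr0; have -> : finset.setX M (finset.set0 : {set J}) = finset.set0.
      by apply/finset.setP => -[i j]; rewrite !inE andbF.
    exact: S0.
  have e0N : finset.set0 \proper N by rewrite finset.proper0.
  case: (@arg_maxP _ _ _ finset.set0 (fun F => F \proper N) ex' e0N) => F0 F0N Hmax.
  have F0sN : F0 \subset N by move: F0N; rewrite finset.properEneq => /andP[].
  have HmaxN : forall F : {set J}, F \subset N -> ex' F <= ex' F0.
    move=> F FN; have [->|FnN] := eqVneq F N.
      apply: le_trans (Hmax _ e0N); rewrite ex0' /ex' /=; lra.
    by apply: Hmax; rewrite finset.properEneq FnN.
  have cardF0 : (#|M| + #|F0| < n)%N.
    have := proper_card F0N; move: card; lia.
  have [A0 [A0sub A0row A0col]] := IH M F0 cardF0.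
  have hA : forall i j, ((i, j) \in A0) ==> ((i \in M) && (j \in F0)).
    by move=> i j; apply/implyP => h; have := fintype.subsetP A0sub _ h; rewrite !inE.
  have hF0 : forall j, (j \in F0) ==> (j \in N).
    by move=> j; apply/implyP => h; exact: (fintype.subsetP F0sN).
  exists A0; split.
  + apply/fintype.subsetP => -[i j]; rewrite !inE /=.
    move: (hA i j) (hF0 j).
    by case: ((i, j) \in A0); case: (j \in F0); case: (i \in M); case: (j \in N).
  + exact: A0row.
  + move=> F FN.
    have hF : forall j, (j \in F) ==> (j \in N).
      by move=> j; apply/implyP => h; exact: (fintype.subsetP FN).
    have eq1 : (finset.setX M N :\: A0) :&: finset.setX [set: I] F =
       ((finset.setX M F0 :\: A0) :&: finset.setX [set: I] (F :&: F0)) :|: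
        finset.setX M (F :\: F0).
      apply/finset.setP => -[i j]; rewrite !inE /=.
      move: (hA i j) (hF0 j) (hF j).
      by case: ((i, j) \in A0); case: (j \in F0); case: (i \in M); case: (j \in N);
        case: (j \in F).
    have d1 : [disjoint (finset.setX M F0 :\: A0) :&: finset.setX [set: I] (F :&: F0) &
        finset.setX M (F :\: F0)].
      rewrite -finset.setI_eq0; apply/eqP/finset.setP => -[i j]; rewrite !inE /=.
      by case: ((i, j) \in A0); case: (j \in F0); case: (i \in M); case: (j \in F).
    rewrite eq1 SU //.
    set F1 := F :&: F0; set F2 := F :\: F0.
    have r1 := A0col F1 (finset.subsetIr F F0).
    have F2N : F0 :|: F2 \subset N.
      apply/fintype.subsetP => j; rewrite /F2 !inE; move: (hF0 j) (hF j).
      by case: (j \in F0); case: (j \in N); case: (j \in F).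
    have hm := HmaxN _ F2N.
    have eq2 : finset.setX M (F0 :|: F2) = finset.setX M F0 :|: finset.setX M F2.
      apply/finset.setP => -[i j]; rewrite /F2 !inE /=.
      by case: (j \in F0); case: (j \in F); case: (i \in M).
    have d2 : [disjoint finset.setX M F0 & finset.setX M F2].
      rewrite -finset.setI_eq0; apply/eqP/finset.setP => -[i j]; rewrite /F2 !inE /=.
      by case: (j \in F0); case: (j \in F); case: (i \in M).
    move: hm; rewrite /ex' eq2 SU // => hm.
    have d3 : [disjoint F2 & F0].
      rewrite -finset.setI_eq0; apply/eqP/finset.setP => j; rewrite /F2 !inE /=.
      by case: (j \in F0); case: (j \in F).
    have ps := psi_sub (finset.subsetIr F F0) d3.
    rewrite /F1 /F2 finset.setID in ps.
    lra.
Qed.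

Lemma main_comb : exists A : {set I * J},
  (forall E : {set I}, S (A :&: finset.setX E [set: J]) <= phi E) /\
  (forall F : {set J}, S (~: A :&: finset.setX [set: I] F) <= psi F).
Proof.
have [A [_ Hr Hc]] := @main_gen (#|[set: I]| + #|[set: J]|).+1 [set: I] [set: J] (ltnSn _).
exists A; split.
  by move=> E; apply: Hr; exact: finset.subsetT.
move=> F; have := Hc F (finset.subsetT F).
have -> : finset.setX [set: I] [set: J] :\: A = ~: A.
  by apply/finset.setP => -[i j]; rewrite !inE /= ?andbT.
by [].
Qed.

End P3.

End MP3.
Import MP3.

Module MP4.
Set Implicit Arguments. Unset Strict Implicit.
Import Order.TTheory GRing.Theory Num.Theory.
Local Open Scope ring_scope.

Section P4.
Variable R : realType.

Lemma convex_pow (q l x y : R) : 1 <= q -> 0 <= l -> l <= 1 -> 0 <= x -> 0 <= y ->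
  (l * x + (1 - l) * y) `^ q <= l * x `^ q + (1 - l) * y `^ q.
Proof.
move=> q1 l0 l1 x0 y0.
have := @convex_powR R q q1 (Itv01 l0 l1) x y.
rewrite !convRE /=; apply.
  by rewrite inE /= in_itv /= x0.
by rewrite inE /= in_itv /= y0.
Qed.

Lemma mink0 (K : finType) (q : R) (om a b c : K -> R) (Y : R) :
  1 <= q -> (forall k, 0 <= om k) -> (forall k, `|a k| <= `|b k| + `|c k|) ->
  \sum_k `|b k| `^ q * om k <= 0 `^ q ->
  \sum_k `|c k| `^ q * om k <= Y `^ q ->
  \sum_k `|a k| `^ q * om k <= (0 + Y) `^ q.
Proof.
move=> q1 om0 habc Hb Hc.
have q0 : 0 < q by apply: lt_le_trans q1.
rewrite add0r; apply: le_trans Hc; apply: ler_sum => k _.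
have Hb0 : \sum_k `|b k| `^ q * om k = 0.
  apply: le_anti; rewrite (le_trans Hb) ?powR0 ?gt_eqF //=.
  by apply: sumr_ge0 => i _; rewrite mulr_ge0 ?powR_ge0.
have := @psumr_eq0P _ _ _ _ (fun i _ => mulr_ge0 (powR_ge0 `|b i| q) (om0 i)) Hb0 k isT.
move/eqP; rewrite mulf_eq0 => /orP[/eqP bk|/eqP ->]; last by rewrite !mulr0.
have bk0 := powR_eq0_eq0 bk.
apply: ler_wpM2r => //; apply: ge0_ler_powR; rewrite ?nnegrE //; first exact: ltW.
by have := habc k; rewrite bk0 add0r.
Qed.

Lemma mink (K : finType) (q : R) (om a b c : K -> R) (X Y : R) :
  1 <= q -> (forall k, 0 <= om k) -> (forall k, `|a k| <= `|b k| + `|c k|) ->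
  0 <= X -> 0 <= Y ->
  \sum_k `|b k| `^ q * om k <= X `^ q ->
  \sum_k `|c k| `^ q * om k <= Y `^ q ->
  \sum_k `|a k| `^ q * om k <= (X + Y) `^ q.
Proof.
move=> q1 om0 habc X0 Y0 Hb Hc.
have q0 : 0 < q by apply: lt_le_trans q1.
have [X0'|Xn] := eqVneq X 0.
  by move: Hb; rewrite X0' => Hb; exact: mink0 Hb Hc.
have [Y0'|Yn] := eqVneq Y 0.
  move: Hc; rewrite Y0' addrC => Hc.
  by apply: (mink0 (b := c) (c := b)) Hc Hb => // k; rewrite addrC.
have Xp : 0 < X by rewrite lt_neqAle eq_sym Xn.
have Yp : 0 < Y by rewrite lt_neqAle eq_sym Yn.
set Z := X + Y.
have Zp : 0 < Z by rewrite addr_gt0.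
set l := X / Z.
have l0 : 0 < l by rewrite divr_gt0.
have l1 : 1 - l = Y / Z by rewrite /l /Z; field; rewrite gt_eqF.
have l1p : 0 < 1 - l by rewrite l1 divr_gt0.
have lq : 0 < l `^ q by rewrite powR_gt0.
have l1q : 0 < (1 - l) `^ q by rewrite powR_gt0.
have pt : forall k, `|a k| `^ q * om k <=
    l / l `^ q * (`|b k| `^ q * om k) + (1 - l) / (1 - l) `^ q * (`|c k| `^ q * om k).
  move=> k.
  have e : `|b k| + `|c k| = l * (`|b k| / l) + (1 - l) * (`|c k| / (1 - l)).
    by field; rewrite !gt_eqF.
  have h1 : `|a k| `^ q <= (`|b k| + `|c k|) `^ q.
    by apply: ge0_ler_powR; rewrite ?nnegrE ?addr_ge0 //; exact: ltW.
  have l1le : l <= 1 by rewrite -subr_ge0 ltW.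
  have h2 := convex_pow q1 (ltW l0) l1le (divr_ge0 (normr_ge0 (b k)) (ltW l0))
    (divr_ge0 (normr_ge0 (c k)) (ltW l1p)).
  rewrite -e in h2.
  rewrite !powRM ?invr_ge0 ?(ltW l0) ?(ltW l1p) // !powRV ?(ltW l0) ?(ltW l1p) // in h2.
  have := ler_wpM2r (om0 k) (le_trans h1 h2).
  move/le_trans; apply.
  have E : (l * (`|b k| `^ q * (l `^ q)^-1) + (1 - l) * (`|c k| `^ q * ((1 - l) `^ q)^-1)) * om k
     = l / l `^ q * (`|b k| `^ q * om k) + (1 - l) / (1 - l) `^ q * (`|c k| `^ q * om k).
    by ring.
  by rewrite E.
apply: le_trans (ler_sum _ (fun k _ => pt k)) _.
rewrite big_split /= -!mulr_sumr.
have c1 : 0 <= l / l `^ q by rewrite divr_ge0 // ltW.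
have c2 : 0 <= (1 - l) / (1 - l) `^ q by rewrite divr_ge0 // ltW.
apply: le_trans (lerD (ler_wpM2l c1 Hb) (ler_wpM2l c2 Hc)) _.
have eX : X `^ q = l `^ q * Z `^ q.
  by rewrite -powRM ?(ltW l0) ?(ltW Zp) // /l divfK // gt_eqF.
have eY : Y `^ q = (1 - l) `^ q * Z `^ q.
  by rewrite -powRM ?(ltW l1p) ?(ltW Zp) // l1 divfK // gt_eqF.
rewrite eX eY.
have E : l / l `^ q * (l `^ q * Z `^ q) + (1 - l) / (1 - l) `^ q * ((1 - l) `^ q * Z `^ q)
   = Z `^ q.
  by field; rewrite !gt_eqF.
by rewrite E.
Qed.

End P4.
End MP4.
Import MP4.

Module MP5.
Set Implicit Arguments. Unset Strict Implicit.
Import Order.TTheory GRing.Theory Num.Theory.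
Local Open Scope ring_scope.

Section P5.
Variables (R : realType) (m n : nat) (mu : 'I_m -> R) (nu : 'I_n -> R) (t q : R) (p : \bar R).
Hypothesis mu0 : forall i, 0 < mu i.
Hypothesis nu0 : forall j, 0 < nu j.
Hypothesis t0 : 0 < t.
Hypothesis q1 : 1 <= q.
Hypothesis qp : (q%:E < p)%E.

Lemma qpos : 0 < q. Proof. exact: lt_le_trans ltr01 q1. Qed.
Lemma qn0 : q != 0. Proof. by rewrite gt_eqF // qpos. Qed.

Lemma rowqK (a : 'M[R]_(m, n)) i : rowq q nu a i `^ q = \sum_j `|a i j| `^ q * nu j.
Proof.
rewrite /rowq powRKV ?qn0 //; apply: sumr_ge0 => j _.
by rewrite mulr_ge0 ?powR_ge0 // ltW.
Qed.

Lemma colqK (a : 'M[R]_(m, n)) j : colq q mu a j `^ q = \sum_i `|a i j| `^ q * mu i.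
Proof.
rewrite /colq powRKV ?qn0 //; apply: sumr_ge0 => i _.
by rewrite mulr_ge0 ?powR_ge0 // ltW.
Qed.

Lemma lqK (a : 'M[R]_(m, n)) :
  lq_norm q mu nu a `^ q = \sum_i \sum_j `|a i j| `^ q * mu i * nu j.
Proof.
rewrite /lq_norm powRKV ?qn0 //; apply: sumr_ge0 => i _; apply: sumr_ge0 => j _.
by rewrite !mulr_ge0 ?powR_ge0 // ltW.
Qed.

Lemma indmulE (A : {set 'I_m * 'I_n}) (a : 'M[R]_(m, n)) i j :
  `|indmul A a i j| `^ q = if (i, j) \in A then `|a i j| `^ q else 0.
Proof. by rewrite mxE; case: ifP => _ //; rewrite normr0 powR0 ?qn0. Qed.

Definition wc (a : 'M[R]_(m, n)) (x : 'I_m * 'I_n) := `|a x.1 x.2| `^ q * mu x.1 * nu x.2.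

Lemma cellsum (a : 'M[R]_(m, n)) (A : {set 'I_m * 'I_n}) : \sum_(x in A) wc a x =
  \sum_(i : 'I_m) \sum_(j : 'I_n) (if (i, j) \in A then `|a i j| `^ q * mu i * nu j else 0).
Proof. by rewrite pair_bigA big_mkcond; apply: eq_bigr => -[i j] _. Qed.

Lemma rowsum a (A : {set 'I_m * 'I_n}) (E : {set 'I_m}) :
  \sum_(i in E) rowq q nu (indmul A a) i `^ q * mu i =
  \sum_(x in A :&: finset.setX E [set: 'I_n]) wc a x.
Proof.
rewrite cellsum big_mkcond; apply: eq_bigr => i _.
case: ifP => iE.
  rewrite rowqK mulr_suml; apply: eq_bigr => j _.
  rewrite indmulE !inE iE andbT /=; case: ifP => _ /=; [ring| by rewrite !mul0r].
by rewrite big1 // => j _; rewrite !inE iE andbF.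
Qed.

Lemma colsum a (B : {set 'I_m * 'I_n}) (F : {set 'I_n}) :
  \sum_(j in F) colq q mu (indmul B a) j `^ q * nu j =
  \sum_(x in B :&: finset.setX [set: 'I_m] F) wc a x.
Proof.
rewrite cellsum exchange_big big_mkcond; apply: eq_bigr => j _.
case: ifP => jF.
  rewrite colqK mulr_suml; apply: eq_bigr => i _.
  rewrite indmulE !inE jF /= ?andbT; case: ifP => _ /=; [ring| by rewrite !mul0r].
by rewrite big1 // => i _; rewrite !inE jF !andbF.
Qed.

Lemma lqsum a (E : {set 'I_m}) (F : {set 'I_n}) :
  lq_norm q mu nu (indmul (finset.setX E F) a) `^ q = \sum_(x in finset.setX E F) wc a x.
Proof.
rewrite lqK cellsum; apply: eq_bigr => i _; apply: eq_bigr => j _.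
by rewrite indmulE; case: ifP => _; rewrite ?mul0r.
Qed.

Lemma msrU k (w : 'I_k -> R) (X Y : {set 'I_k}) : [disjoint X & Y] ->
  msr w (X :|: Y) = msr w X + msr w Y.
Proof. by move=> d; rewrite /msr -bigU //; apply: eq_bigl => x; rewrite !inE. Qed.

Lemma msr0 k (w : 'I_k -> R) : msr w finset.set0 = 0.
Proof. by rewrite /msr big_set0. Qed.

Lemma sub_gen k (w : 'I_k -> R) (C : R) : (forall i, 0 < w i) -> 0 <= C ->
  forall E0 E1 E2 : {set 'I_k}, E1 \subset E0 -> [disjoint E2 & E0] ->
  C * msr w (E0 :|: E2) `^ (1 - q * einv p) + C * msr w E1 `^ (1 - q * einv p) <=
  C * msr w (E1 :|: E2) `^ (1 - q * einv p) + C * msr w E0 `^ (1 - q * einv p).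
Proof.
move=> w0 C0 E0 E1 E2 s d.
rewrite -!mulrDr; apply: ler_wpM2l => //.
have bb : 0 < 1 - q * einv p <= 1 by rewrite (beta_gt0 q1 qp) (beta_le1 q1 qp).
have d1 : [disjoint E0 & E2] by rewrite disjoint_sym.
have d2 : [disjoint E1 & E2] by rewrite disjoint_sym (disjointWr s d).
rewrite (msrU w d1) (msrU w d2).
have := @incr_pow R (1 - q * einv p) (msr w E1) (msr w E0) (msr w E2) bb.
rewrite (msr_ge0 w0) (msr_sub w0 s) (msr_ge0 w0) => /(_ isT isT).
lra.
Qed.

Lemma GP (a : 'M[R]_(m, n)) (T : R) : 0 < T ->
  (forall (E : {set 'I_m}) (F : {set 'I_n}), E != finset.set0 -> F != finset.set0 ->
     lq_norm q mu nu (indmul (finset.setX E F) a) <=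
     T * Num.max (msr mu E `^ (q^-1 - einv p)) (t^-1 * msr nu F `^ (q^-1 - einv p))) ->
  exists A : {set 'I_m * 'I_n},
    (mnorm p q mu nu (indmul A a) <= T%:E)%E /\
    (mnormT p q mu nu (indmul (~: A) a) <= (T / t)%:E)%E.
Proof.
move=> T0 Hyp.
set b := 1 - q * einv p.
have bb : 0 < b <= 1 by rewrite (beta_gt0 q1 qp) (beta_le1 q1 qp).
have b0 : 0 < b by case/andP: bb.
have aq : (q^-1 - einv p) * q = b by rewrite /b mulrBl mulVf ?qn0 // mulrC.
have Tt : 0 < T / t by rewrite divr_gt0.
pose phi := fun E : {set 'I_m} => T `^ q * msr mu E `^ b.
pose psi := fun F : {set 'I_n} => (T / t) `^ q * msr nu F `^ b.
have [A [Hr Hc]] : exists A : {set 'I_m * 'I_n},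
  (forall E : {set 'I_m}, \sum_(x in A :&: finset.setX E [set: 'I_n]) wc a x <= phi E) /\
  (forall F : {set 'I_n}, \sum_(x in ~: A :&: finset.setX [set: 'I_m] F) wc a x <= psi F).
  apply: main_comb.
  - by rewrite /phi msr0 powR0 ?mulr0 // gt_eqF.
  - by rewrite /psi msr0 powR0 ?mulr0 // gt_eqF.
  - by move=> E; rewrite /phi mulr_ge0 ?powR_ge0.
  - by move=> F; rewrite /psi mulr_ge0 ?powR_ge0.
  - by move=> E0 E1 E2 s d; apply: sub_gen => //; exact: powR_ge0.
  - by move=> F0 F1 F2 s d; apply: sub_gen => //; exact: powR_ge0.
  - move=> E F En Fn.
    have H1 := Hyp E F En Fn.
    rewrite -lqsum.
    set X := msr mu E `^ (q^-1 - einv p).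
    set Y := t^-1 * msr nu F `^ (q^-1 - einv p).
    have X0 : 0 <= X := powR_ge0 _ _.
    have Y0 : 0 <= Y by rewrite mulr_ge0 ?invr_ge0 ?powR_ge0 // ltW.
    have H2 : lq_norm q mu nu (indmul (finset.setX E F) a) `^ q <= (T * Num.max X Y) `^ q.
      apply: ge0_ler_powR => //; first exact: ltW qpos.
        by rewrite nnegrE powR_ge0.
      by rewrite nnegrE mulr_ge0 // ?(ltW T0) // le_max X0.
    apply: (le_trans H2).
    case: (leP X Y) => h.
    + rewrite le_max; apply/orP; right.
      rewrite /psi /Y mulrA powRM ?mulr_ge0 ?invr_ge0 ?powR_ge0 ?(ltW T0) ?(ltW t0) //.
      by rewrite -powRrM aq.
    + rewrite le_max; apply/orP; left.
      rewrite /phi /X powRM ?powR_ge0 ?(ltW T0) //.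
      by rewrite -powRrM aq.
exists A; split.
- apply: (W1 mu0 _ q1 qp T0) => [i|E En]; first exact: powR_ge0.
  by rewrite rowsum.
- apply: (W1 nu0 _ q1 qp Tt) => [j|F Fn]; first exact: powR_ge0.
  by rewrite colsum.
Qed.

Lemma rowq_ge0 (b : 'M[R]_(m, n)) i : 0 <= rowq q nu b i.
Proof. exact: powR_ge0. Qed.

Lemma colq_ge0 (b : 'M[R]_(m, n)) j : 0 <= colq q mu b j.
Proof. exact: powR_ge0. Qed.

Lemma rowbound (b : 'M[R]_(m, n)) (E : {set 'I_m}) (F : {set 'I_n}) :
  \sum_i \sum_j `|indmul (finset.setX E F) b i j| `^ q * mu i * nu j <=
  \sum_(i in E) rowq q nu b i `^ q * mu i.
Proof.
rewrite [X in _ <= X]big_mkcond /=; apply: ler_sum => i _; case: ifP => iE.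
  rewrite rowqK mulr_suml; apply: ler_sum => j _; rewrite indmulE !inE iE /=.
  case: ifP => _; first by rewrite mulrAC.
  by rewrite !mul0r !mulr_ge0 ?powR_ge0 // ltW.
by rewrite big1 // => j _; rewrite indmulE !inE iE /= !mul0r.
Qed.

Lemma colbound (c : 'M[R]_(m, n)) (E : {set 'I_m}) (F : {set 'I_n}) :
  \sum_i \sum_j `|indmul (finset.setX E F) c i j| `^ q * mu i * nu j <=
  \sum_(j in F) colq q mu c j `^ q * nu j.
Proof.
rewrite exchange_big [X in _ <= X]big_mkcond /=; apply: ler_sum => j _; case: ifP => jF.
  rewrite colqK mulr_suml; apply: ler_sum => i _; rewrite indmulE !inE jF /= andbT.
  case: ifP => _ //.
  by rewrite !mul0r !mulr_ge0 ?powR_ge0 // ltW.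
by rewrite big1 // => i _; rewrite indmulE !inE jF /= andbF !mul0r.
Qed.

Lemma Xpow (N M C : R) : 0 <= N -> 0 <= M -> 0 < C ->
  C `^ q = 1 - q * einv p ->
  (N * M `^ (q^-1 - einv p) / C) `^ q =
  N `^ q * M `^ (1 - q * einv p) / (1 - q * einv p).
Proof.
move=> N0 M0 C0 Cq.
have aq : (q^-1 - einv p) * q = 1 - q * einv p by rewrite mulrBl mulVf ?qn0 // mulrC.
rewrite powRM ?mulr_ge0 ?powR_ge0 ?invr_ge0 ?(ltW C0) //.
rewrite powRM ?powR_ge0 // powRV ?(ltW C0) // -powRrM aq Cq.
by [].
Qed.

Lemma LB (a b c : 'M[R]_(m, n)) : a = b + c ->
  ((Cpq p q)%:E * triple_norm p q t mu nu a <=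
   mnorm p q mu nu b + t%:E * mnormT p q mu nu c)%E.
Proof.
move=> Habc.
have Hb0 : (0 <= mnorm p q mu nu b)%E := weak_norm_ge0 mu (rowq_ge0 b) qp.
have Hc0 : (0 <= mnormT p q mu nu c)%E := weak_norm_ge0 nu (colq_ge0 c) qp.
have tc0 : (0 <= t%:E * mnormT p q mu nu c)%E by rewrite mule_ge0 // lee_fin ltW.
case Eb : (mnorm p q mu nu b) => [Nb| |]; last by rewrite Eb in Hb0.
  2: by rewrite addye ?leey // gt_eqF // (lt_le_trans _ tc0).
case Ec : (mnormT p q mu nu c) => [Nc| |]; last by rewrite Ec in Hc0.
  2: by rewrite [(t%:E * _)%E]muleC gt0_mulye ?lte_fin // addey ?leey.
have Nb0 : 0 <= Nb by rewrite -lee_fin -Eb.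
have Nc0 : 0 <= Nc by rewrite -lee_fin -Ec.
set be := 1 - q * einv p.
have be0 : 0 < be := beta_gt0 q1 qp.
set C := Cpq p q.
have C0 : 0 < C by rewrite /C /Cpq powR_gt0.
have Cq : C `^ q = be by rewrite /C /Cpq powRKV ?qn0 // ltW.
rewrite -EFinM -EFinD.
have Hsup : (triple_norm p q t mu nu a <= ((Nb + t * Nc) / C)%:E)%E.
  apply: ge_ereal_sup => _ [[E F] /= [En Fn] <-]; rewrite lee_fin.
  set al := q^-1 - einv p.
  set X := Nb * msr mu E `^ al / C.
  set Y := Nc * msr nu F `^ al / C.
  have X0 : 0 <= X by rewrite /X divr_ge0 ?mulr_ge0 ?powR_ge0 // ltW.
  have Y0 : 0 <= Y by rewrite /Y divr_ge0 ?mulr_ge0 ?powR_ge0 // ltW.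
  have key : lq_norm q mu nu (indmul (finset.setX E F) a) <= X + Y.
    rewrite -(powR_lee qpos) ?powR_ge0 ?addr_ge0 //.
    pose om := fun k : 'I_m * 'I_n => mu k.1 * nu k.2.
    have Sa : lq_norm q mu nu (indmul (finset.setX E F) a) `^ q =
      \sum_k `|indmul (finset.setX E F) a k.1 k.2| `^ q * om k.
      by rewrite lqK pair_bigA; apply: eq_bigr => -[i j] _; rewrite /om /= mulrA.
    have Sb : \sum_k `|indmul (finset.setX E F) b k.1 k.2| `^ q * om k <= X `^ q.
      have -> : \sum_k `|indmul (finset.setX E F) b k.1 k.2| `^ q * om k =
         \sum_i \sum_j `|indmul (finset.setX E F) b i j| `^ q * mu i * nu j.
        by rewrite pair_bigA; apply: eq_bigr => -[i j] _; rewrite /om /= mulrA.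
      apply: le_trans (rowbound b E F) _.
      have Hw : (weak_norm p mu (rowq q nu b) <= Nb%:E)%E by move: Eb; rewrite /mnorm => ->.
      apply: le_trans (W2 mu0 (rowq_ge0 b) q1 qp Hw E) _.
      by rewrite /X Xpow // msr_ge0.
    have Sc : \sum_k `|indmul (finset.setX E F) c k.1 k.2| `^ q * om k <= Y `^ q.
      have -> : \sum_k `|indmul (finset.setX E F) c k.1 k.2| `^ q * om k =
         \sum_i \sum_j `|indmul (finset.setX E F) c i j| `^ q * mu i * nu j.
        by rewrite pair_bigA; apply: eq_bigr => -[i j] _; rewrite /om /= mulrA.
      apply: le_trans (colbound c E F) _.
      have Hw : (weak_norm p nu (colq q mu c) <= Nc%:E)%E by move: Ec; rewrite /mnormT => ->.
      apply: le_trans (W2 nu0 (colq_ge0 c) q1 qp Hw F) _.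
      by rewrite /Y Xpow // msr_ge0.
    rewrite Sa; apply: (mink q1 _ _ X0 Y0 Sb Sc).
      by move=> k; rewrite /om mulr_ge0 // ltW.
    move=> [i j] /=; rewrite !mxE; case: ifP => _; last by rewrite normr0 addr0.
    by rewrite Habc mxE ler_normD.
  set M1 := msr mu E `^ al; set M2 := t^-1 * msr nu F `^ al.
  have M1p : 0 < M1 by rewrite powR_gt0 // msr_gt0.
  have M2p : 0 <= M2 by rewrite mulr_ge0 ?invr_ge0 ?powR_ge0 // ltW.
  have Mxp : 0 < Num.max M1 M2 by rewrite lt_max M1p.
  rewrite mulrC ler_pdivrMr //.
  apply: le_trans key _.
  have e1 : Nb * msr mu E `^ al <= Nb * Num.max M1 M2 by rewrite ler_wpM2l // le_max lexx.
  have e2 : Nc * msr nu F `^ al <= t * Nc * Num.max M1 M2.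
    have -> : Nc * msr nu F `^ al = t * Nc * M2 by rewrite /M2; field; rewrite gt_eqF.
    by rewrite ler_wpM2l ?mulr_ge0 ?(ltW t0) // le_max lexx orbT.
  rewrite /X /Y -mulrDl mulrAC ler_pM2r ?invr_gt0 // mulrDl.
  exact: lerD.
apply: le_trans (lee_wpmul2l _ Hsup) _; first by rewrite lee_fin ltW.
by rewrite -EFinM mulrC divfK ?gt_eqF.
Qed.

Lemma tripleH (a : 'M[R]_(m, n)) (T : R) : (triple_norm p q t mu nu a <= T%:E)%E ->
  forall (E : {set 'I_m}) (F : {set 'I_n}), E != finset.set0 -> F != finset.set0 ->
     lq_norm q mu nu (indmul (finset.setX E F) a) <=
     T * Num.max (msr mu E `^ (q^-1 - einv p)) (t^-1 * msr nu F `^ (q^-1 - einv p)).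
Proof.
move=> HT E F En Fn.
set Mx := Num.max _ _.
have Mxp : 0 < Mx by rewrite lt_max powR_gt0 // msr_gt0.
have Hel : ((Mx^-1 * lq_norm q mu nu (indmul (finset.setX E F) a))%:E <=
             triple_norm p q t mu nu a)%E.
  apply: ereal_sup_ge.
  exists ((Mx^-1 * lq_norm q mu nu (indmul (finset.setX E F) a))%:E) => //.
  by exists (E, F) => //=; split.
by have := le_trans Hel HT; rewrite lee_fin mulrC ler_pdivrMr.
Qed.

Hypothesis m0 : (0 < m)%N.
Hypothesis n0 : (0 < n)%N.

Lemma triple_ge0 (a : 'M[R]_(m, n)) : (0 <= triple_norm p q t mu nu a)%E.
Proof.
apply: ereal_sup_ge.
exists ((Num.max (msr mu [set: 'I_m] `^ (q^-1 - einv p))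
   (t^-1 * msr nu [set: 'I_n] `^ (q^-1 - einv p)))^-1 *
   lq_norm q mu nu (indmul (finset.setX [set: 'I_m] [set: 'I_n]) a))%:E.
  exists ([set: 'I_m], [set: 'I_n]) => //=; split.
    by apply/set0Pn; exists (Ordinal m0); rewrite inE.
  by apply/set0Pn; exists (Ordinal n0); rewrite inE.
rewrite lee_fin mulr_ge0 ?powR_ge0 // invr_ge0 le_max powR_ge0 //.
Qed.

Lemma Kbound (a : 'M[R]_(m, n)) (T : R) : 0 < T ->
  (triple_norm p q t mu nu a <= T%:E)%E -> (Kfun p q t mu nu a <= (2 * T)%:E)%E.
Proof.
move=> T0 HT.
have [A [HA HB]] := GP T0 (tripleH HT).
apply: (@le_trans _ _ (mnorm p q mu nu (indmul A a) +
                      t%:E * mnormT p q mu nu (indmul (~: A) a))%E).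
  apply: ge_ereal_inf; exists (mnorm p q mu nu (indmul A a) +
                      t%:E * mnormT p q mu nu (indmul (~: A) a))%E => //.
  exists (indmul A a, indmul (~: A) a) => //=.
  apply/matrixP => i j; rewrite !mxE inE.
  by case: ((i, j) \in A) => /=; rewrite ?addr0 ?add0r.
apply: le_trans (leeD HA (lee_wpmul2l _ HB)) _; first by rewrite lee_fin ltW.
have Eq : T + t * (T / t) = 2 * T by field; rewrite gt_eqF.
by rewrite -EFinM -EFinD Eq.
Qed.

Lemma main_sec :
  (forall a : 'M[R]_(m, n),
     ((Cpq p q)%:E * triple_norm p q t mu nu a <= Kfun p q t mu nu a)%E /\
     (Kfun p q t mu nu a <= 2%:E * triple_norm p q t mu nu a)%E) /\
  (forall a : 'M[R]_(m, n),
     (triple_norm p q t mu nu a <= 1)%E ->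
     exists A B : {set 'I_m * 'I_n},
       [/\ (A :|: B)%SET = [set: 'I_m * 'I_n]%SET, (A :&: B)%SET = finset.set0,
           (mnorm p q mu nu (indmul A a) <= 1)%E &
           (mnormT p q mu nu (indmul B a) <= (t^-1)%:E)%E]).
Proof.
split.
  move=> a; split.
    by apply: le_ereal_inf_tmp => _ [[b c] /= Habc <-]; exact: LB.
  have tr0 := triple_ge0 a.
  case Et : (triple_norm p q t mu nu a) => [T0| |]; last by rewrite Et in tr0.
    have T00 : 0 <= T0 by rewrite -lee_fin -Et.
    have [T0p|] := ltP 0 T0.
      by rewrite -EFinM; apply: Kbound => //; rewrite Et.
    move=> T0le; have -> : T0 = 0 by apply: le_anti; rewrite T0le T00.
    apply/lee_addgt0Pr => e e0.
    have e2 : 0 < e / 2 by rewrite divr_gt0.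
    have HT : (triple_norm p q t mu nu a <= (e / 2)%:E)%E.
      by rewrite Et lee_fin; apply: ltW; exact: le_lt_trans T0le e2.
    have := Kbound e2 HT.
    have -> : 2 * (e / 2) = e by field.
    by rewrite mule0 add0e.
  by rewrite muleC gt0_mulye ?lte_fin // leey.
move=> a Ha.
have [A [HA HB]] := GP ltr01 (tripleH Ha).
exists A, (~: A); split.
- exact: finset.setUCr.
- exact: finset.setICr.
- exact: HA.
- by rewrite -div1r.
Qed.

End P5.

End MP5.
Import MP5.

Unset Implicit Arguments.
Local Open Scope classical_set_scope.
Local Open Scope ring_scope.

Theorem theorem2p5 (R : realType) (m n : nat) (mu : 'I_m -> R) (nu : 'I_n -> R)
  (t q : R) (p : \bar R) :
  (0 < m)%N -> (0 < n)%N ->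
  (forall i, 0 < mu i) -> (forall j, 0 < nu j) ->
  0 < t -> 1 <= q -> (q%:E < p)%E ->
  (forall a : 'M[R]_(m, n),
     ((Cpq p q)%:E * triple_norm p q t mu nu a <= Kfun p q t mu nu a)%E /\
     (Kfun p q t mu nu a <= 2%:E * triple_norm p q t mu nu a)%E) /\
  (forall a : 'M[R]_(m, n),
     (triple_norm p q t mu nu a <= 1)%E ->
     exists A B : {set 'I_m * 'I_n},
       [/\ (A :|: B)%SET = [set: 'I_m * 'I_n]%SET, (A :&: B)%SET = finset.set0,
           (mnorm p q mu nu (indmul A a) <= 1)%E &
           (mnormT p q mu nu (indmul B a) <= (t^-1)%:E)%E]).
Proof.
move=> m0 n0 mu0 nu0 t0 q1 qp.
exact: (main_sec mu0 nu0 t0 q1 qp m0 n0).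
Qed.
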